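(* Let $n=2m+1\ge3$, $I\subset\{0,\dots,m\}$ nonempty, $d\in\mathbb Z$, and let $(v_i)_{i\in n\mathbb Z\pm I}$ be a $d$-face of type $I$ with $\mu_i=v_i-\omega_i$. Let $i\in I$ and $\mu\in\{\mu_i,\mu_{-i}\}$, and suppose that $\mu(j)+\mu(j^* )=d$ holds for all $j\in A_i$, or for all $j\in B_i$. Then $\mu$ is self-dual, i.e. $\mu+\mu^*=\mathbf d$ (equivalently $\mu_i=\mu_{-i}$).
   Context: For $v\in\mathbb Z^n$ write $v(j)$ for its $j$-th entry, $\Sigma v$ for the sum of its entries, $v^*$ for the vector with $v^*(j)=v(n+1-j)$, $\mathbf d=(d,\dots,d)$, and $v\ge w$ if $v(j)\ge w(j)$ for all $j$; $j^*=n+1-j$, $A_i=\{1,\dots,i\}\cup\{i^*,\dots,n\}$, $B_i=\{i+1,\dots,n-i\}$. The index set $n\mathbb Z\pm I$ is the set of integers congruent mod $n$ to an element of $I\cup(-I)$. A $d$-face of type $I$ is a family $(v_i)_{i\in n\mathbb Z\pm I}$ of vectors in $\mathbb Z^n$ with: (F1) $v_{i+n}=v_i-\mathbf 1$; (F2) $v_i\ge v_j$ whenever $i\le j$; (F3) $\Sigma v_i-\Sigma v_j=j-i$; (F4) $v_i+v_{-i}^*=\mathbf d$, for all indices $i,j$. For $i=nb+c$ with $b\in\mathbb Z$, $0\le c<n$, $\omega_i=((-1)^{(c)},0^{(n-c)})-\mathbf b$, where $(x^{(p)},y^{(q)})$ denotes $x$ repeated $p$ times followed by $y$ repeated $q$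 times. *)

(* Defs.v *)
From mathcomp Require Import all_boot all_order all_algebra.
Set Implicit Arguments. Unset Strict Implicit. Unset Printing Implicit Defensive.
Import Order.TTheory GRing.Theory Num.Theory.
Local Open Scope ring_scope.

(* A vector of Z^n is a function nat -> int, only entries 1..n matter. *)
Definition vec := nat -> int.

Definition in_idx (n m : nat) (I : {set 'I_m.+1}) (k : int) : Prop :=
  exists2 i : 'I_m.+1, i \in I &
    ((k == (nat_of_ord i)%:Z %[mod n%:Z])%Z || (k == - (nat_of_ord i)%:Z %[mod n%:Z])%Z).

Definition vsum (n : nat) (v : vec) : int := \sum_(1 <= j < n.+1) v j.

(* omega_i for i = n b + c, 0 <= c < n : ((-1)^(c), 0^(n-c)) - b *)
Definition omega (n : nat) (i : int) : vec :=
  fun j => (if (j <= `|(i %% n%:Z)%Z|)%N then -1 else 0) - (i %/ n%:Z)%Z.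

Definition face (n m : nat) (I : {set 'I_m.+1}) (d : int) (v : int -> vec) : Prop :=
  [/\ (* F1 *) (forall i, in_idx n I i -> forall j, (1 <= j <= n)%N ->
                  v (i + n%:Z) j = v i j - 1),
      (* F2 *) (forall i k, in_idx n I i -> in_idx n I k -> i <= k ->
                  forall j, (1 <= j <= n)%N -> v k j <= v i j),
      (* F3 *) (forall i k, in_idx n I i -> in_idx n I k ->
                  vsum n (v i) - vsum n (v k) = k - i) &
      (* F4 *) (forall i, in_idx n I i -> forall j, (1 <= j <= n)%N ->
                  v i j + v (- i) (n.+1 - j)%N = d)].

Definition mu_of (n : nat) (v : int -> vec) (i : int) : vec :=
  fun j => v i j - omega n i j.

Definition inA (n i j : nat) : bool := (1 <= j <= n)%N && ((j <= i)%N || (n.+1 - i <= j)%N).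
Definition inB (n i j : nat) : bool := (i.+1 <= j <= n - i)%N.

(* Main.v *)
Require Import Defs.
From mathcomp Require Import all_boot all_order all_algebra.
From mathcomp Require Import zify.
Import Order.TTheory GRing.Theory Num.Theory.
Local Open Scope ring_scope.
Lemma om_pos n c j : (c < n)%N -> omega n c%:Z j = if (j <= c)%N then -1 else 0.
Proof.
move=> h; rewrite /omega modz_small ?divz_small ?subr0 //; apply/andP; split => //; lia.
Qed.

Lemma om_neg n c j : (c < n)%N -> (1 <= j <= n)%N ->
  omega n (- c%:Z) j = if (n.+1 - c <= j)%N then 1 else 0.
Proof.
move=> h hj; case: c h => [|c] h.
  rewrite oppr0 om_pos //; case: ifP; case: ifP => //; lia.
have e : - (c.+1)%:Z = (-1) * n%:Z + (n - c.+1)%N%:Z by lia.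
have hn : n%:Z != 0 by lia.
rewrite /omega e modzMDl divzMDl // modz_small ?divz_small; last 2 first.
- apply/andP; split => //; lia.
- apply/andP; split => //; lia.
case h1: (j <= _)%N; case h2: (n.+1 - c.+1 <= j)%N; lia.
Qed.

Lemma in_c n m (I : {set 'I_m.+1}) (i : 'I_m.+1) : i \in I ->
  [/\ in_idx n I (i%:Z), in_idx n I (- i%:Z) & in_idx n I (i%:Z - n%:Z)].
Proof.
move=> hi; split; exists i => //; rewrite ?eqxx ?orbT //.
by rewrite eqz_mod_dvd addrAC subrr add0r dvdzE abszN dvdnn.
Qed.
Lemma suma N c K : (c < K)%N ->
  \sum_(1 <= j < N.+1) (if (j <= c)%N || (K <= j)%N then 1 else 0 : int)
  = (minn N c)%:Z + (N.+1 - K)%:Z.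
Proof.
move=> hK; elim: N => [|N IH]; first by rewrite big_geq //; lia.
rewrite big_nat_recr //= IH; case h1: (N.+1 <= c)%N; case h2: (K <= N.+1)%N => /=; lia.
Qed.

Lemma sum0 (F : nat -> int) N : (forall j, (1 <= j <= N)%N -> 0 <= F j) ->
  \sum_(1 <= j < N.+1) F j = 0 -> forall j, (1 <= j <= N)%N -> F j = 0.
Proof.
elim: N => [|N IH] hF; first by move=> _ j; lia.
rewrite big_nat_recr //= => /eqP.
have h1 : 0 <= \sum_(1 <= j < N.+1) F j.
  rewrite big_nat_cond; apply: sumr_ge0 => k /andP[/andP[a b] _]; apply: hF; lia.
rewrite paddr_eq0 //; last by apply: hF; lia.
move=> /andP[/eqP s /eqP f] j hj.
have [->|ne] := eqVneq j N.+1; first by [].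
apply: IH => //; [move=> k hk; apply: hF; lia | lia].
Qed.
Theorem lemma5p3p6 (m : nat) (I : {set 'I_m.+1}) (d : int) (v : int -> vec)
  (hm : (1 <= m)%N) (hI : I != set0) (hface : face (2 * m).+1 I d v)
  (i : 'I_m.+1) (hi : i \in I) (s : bool) :
  let n := (2 * m).+1 in
  let mu := mu_of n v (if s then (nat_of_ord i)%:Z else - (nat_of_ord i)%:Z) in
  (forall j, inA n i j -> mu j + mu (n.+1 - j)%N = d) \/
  (forall j, inB n i j -> mu j + mu (n.+1 - j)%N = d) ->
  forall j, (1 <= j <= n)%N -> mu j + mu (n.+1 - j)%N = d.
Proof.
move=> n mu; rewrite /mu; clear mu; move=> H; rewrite -/n in hface.
have hc : (nat_of_ord i <= m)%N by rewrite -ltnS ltn_ord.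
have [ic inc icn] := @in_c n m I i hi.
move: H ic inc icn; set c := nat_of_ord i => H ic inc icn.
have hcn : (c < n)%N by rewrite /n; lia.
have h2c : (2 * c < n)%N by rewrite /n; lia.
case: hface => F1 F2 F3 F4.
pose dl j := v (- c%:Z) j - v c%:Z j.
pose a j : int := if (j <= c)%N || (n.+1 - c <= j)%N then 1 else 0.
have d0 : forall j, (1 <= j <= n)%N -> 0 <= dl j.
  move=> j hj; rewrite subr_ge0; apply: F2 => //; lia.
have d1 : forall j, (1 <= j <= n)%N -> dl j <= 1.
  move=> j hj; have := F1 _ icn j hj; rewrite subrK => e.
  have := F2 _ _ icn inc ltac:(rewrite /n in hcn *; lia) j hj.
  rewrite /dl; lia.
have sd : \sum_(1 <= j < n.+1) dl j = 2 * c%:Z.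
  rewrite /dl sumrB; have := F3 _ _ inc ic; rewrite /vsum => ->; lia.
have sa : \sum_(1 <= j < n.+1) a j = 2 * c%:Z.
  rewrite /a suma; rewrite /n in hcn *; lia.
have key : forall j, (1 <= j <= n)%N ->
    (mu_of n v (if s then c%:Z else - c%:Z) j +
     mu_of n v (if s then c%:Z else - c%:Z) (n.+1 - j)%N = d <-> dl j = a j).
  move=> j hj; have hj' : (1 <= n.+1 - j <= n)%N by lia.
  have f1 := F4 _ ic j hj; have f2 := F4 _ inc j hj; rewrite opprK in f2.
  have e1 : (n.+1 - j <= c)%N = (n.+1 - c <= j)%N by apply/idP/idP; lia.
  have e2 : (n.+1 - c <= n.+1 - j)%N = (j <= c)%N by apply/idP/idP; lia.
  rewrite /mu_of /dl /a; case: s H => H;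
    rewrite ?om_pos ?om_neg // ?e1 ?e2;
    case h1: (j <= c)%N; case h2: (n.+1 - c <= j)%N => /=; split; try lia; match goal with |- ?g => idtac g; fail 100 end.
move=> j hj; apply/key => //.
case: H => H.
- have hz := @sum0 (fun j => dl j - a j) n.
  suff : dl j - a j = 0 by lia.
  apply: hz => //; last by rewrite sumrB sd sa subrr.
  move=> k hk; case ha: ((k <= c) || (n.+1 - c <= k))%N.
    have hA : inA n c k by rewrite /inA hk ha.
    by move/(key k hk): (H k hA) => ->; rewrite subrr.
  by rewrite /a ha subr0; apply: d0.
- have hz := @sum0 (fun j => a j - dl j) n.
  suff : a j - dl j = 0 by lia.
  apply: hz => //; last by rewrite sumrB sd sa subrr.
  move=> k hk; case ha: ((k <= c) || (n.+1 - c <= k))%N.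
    by rewrite /a ha subr_ge0; apply: d1.
  have hB : inB n c k.
    move/negbT/norP: ha => [h1 h2]; rewrite /inB; apply/andP; split; lia.
  by move/(key k hk): (H k hB) => ->; rewrite subrr.
Qed.
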